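(* Let $X$ be an infinite-dimensional first-countable topological vector space over $\mathbb{K}$ ($\mathbb{K}=\mathbb{R}$ or $\mathbb{C}$). Then $w(X)\le\dim(X)$.
   Context: The weight $w(X)$ is the smallest cardinality of a base for the topology of $X$; $\dim(X)$ is the (Hamel) dimension of $X$. *)

(* Defs.v *)
From HB Require Import structures.
From mathcomp Require Import all_boot all_order all_algebra.
From mathcomp Require Import all_classical all_reals all_analysis.
From mathcomp Require Import complex.
Set Implicit Arguments. Unset Strict Implicit. Unset Printing Implicit Defensive.
Import Order.TTheory GRing.Theory Num.Theory.
Local Open Scope classical_set_scope.
Local Open Scope ring_scope.

Definition first_countable (T : topologicalType) : Prop :=
  forall x : T, exists B : set (set T),
    [/\ countable B, (forall U, B U -> nbhs x U) &
        (forall V, nbhs x V -> exists2 U, B U & U `<=` V)].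

Section Hamel.
Variables (K : numDomainType) (V : lmodType K).

Definition lin_indep (H : set V) : Prop :=
  forall (s : seq V) (c : V -> K), uniq s -> (forall v, v \in s -> H v) ->
    \sum_(v <- s) c v *: v = 0 -> forall v, v \in s -> c v = 0.

Definition spans (H : set V) : Prop :=
  forall x : V, exists (s : seq V) (c : V -> K),
    (forall v, v \in s -> H v) /\ x = \sum_(v <- s) c v *: v.

Definition hamel_basis (H : set V) : Prop := lin_indep H /\ spans H.

Definition infinite_dimensional : Prop :=
  ~ (exists S : set V, finite_set S /\ spans S).
End Hamel.

(* Main.v *)
Require Import Defs.
From HB Require Import structures.
From mathcomp Require Import all_boot all_order all_algebra.
From mathcomp Require Import all_classical all_reals all_analysis.
From mathcomp Require Import complex.
From mathcomp Require Import lra.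
Import Order.TTheory GRing.Theory Num.Theory.
Local Open Scope classical_set_scope.

Module Aux.
Set Implicit Arguments. Unset Strict Implicit.

Definition cle {T U} (A : set T) (B : set U) :=
  exists f : T -> U, (forall x, A x -> B (f x)) /\
    (forall x y, A x -> A y -> f x = f y -> x = y).

Lemma cle_refl T (A : set T) : cle A A.
Proof. by exists id; split. Qed.

Lemma cle_trans T U V (A : set T) (B : set U) (C : set V) :
  cle A B -> cle B C -> cle A C.
Proof.
move=> [f [fAB fi]] [g [gBC gi]]; exists (g \o f); split => [x Ax|x y Ax Ay /= e].
  exact/gBC/fAB.
by apply: fi => //; apply: gi => //; apply: fAB.
Qed.

Lemma cle_sub T (A B : set T) : A `<=` B -> cle A B.
Proof. by move=> AB; exists id; split => // x /AB. Qed.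

Lemma cle_X T T' U U' (A : set T) (A' : set T') (B : set U) (B' : set U') :
  cle A B -> cle A' B' -> cle (A `*` A') (B `*` B').
Proof.
move=> [f [fAB fi]] [g [gBC gi]]; exists (fun p => (f p.1, g p.2)); split.
  by move=> [x y] [/= Ax Ay]; split; [apply: fAB|apply: gBC].
move=> [x y] [x' y'] [/= Ax Ay] [/= Ax' Ay'] [e1 e2].
by rewrite (fi _ _ Ax Ax' e1) (gi _ _ Ay Ay' e2).
Qed.

Lemma cle_image T U (f : T -> U) (A : set T) (a0 : T) :
  cle (f @` A) A.
Proof.
have /choice[g hg] : forall y, exists x, (f @` A) y -> A x /\ f x = y.
  move=> y.
  have [[x Ax fx]|ny] := pselect ((f @` A) y); first by exists x.
  by exists a0.
exists g; split => [y /hg []//|y y' /hg [_ e] /hg [_ e'] gg].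
by rewrite -e -e' gg.
Qed.

Lemma cle_cardle T U (A : set T) (B : set U) : cle A B -> (A #<= B)%card.
Proof.
elim/Ppointed: U => U in B *.
  move=> [f [fAB _]].
  have -> : A = set0 by apply/seteqP; split => // x /fAB _; exact: (no (f x)).
  exact: card_ge0.
move=> [f [fAB fi]]; apply/pcard_leP; apply/injfunPex; exists f.
  by move=> x /= Ax; apply: fAB.
by move=> x y; rewrite !inE => Ax Ay; apply: fi.
Qed.

Lemma cardle_cle T U (A : set T) (B : set U) (a0 : T) : A a0 ->
  (A #<= B)%card -> cle A B.
Proof.
move=> Aa0 /card_leP [F].
pose u0 : U := val (F (SigSub (mem_set Aa0))).
pose f (x : T) : U := match pselect (A x) with
  | left Ax => val (F (SigSub (mem_set Ax))) | right _ => u0 end.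
exists f; split.
  move=> x Ax; rewrite /f; case: pselect => // Ax'.
  exact: (set_mem (valP (F (SigSub (mem_set Ax'))))).
move=> x y Ax Ay; rewrite /f; case: pselect => // Ax'; case: pselect => // Ay'.
move=> /val_inj /(@inj _ _ _ F) => e.
have := e (in_setT _) (in_setT _).
by move=> /(congr1 val).
Qed.

Lemma cle_total T U (A : set T) (B : set U) (t0 : T) (u0 : U) :
  cle A B \/ cle B A.
Proof.
pose ok (R : set (T * U)) := [/\ forall p, R p -> A p.1 /\ B p.2,
  forall x y y', R (x, y) -> R (x, y') -> y = y' &
  forall x x' y, R (x, y) -> R (x', y) -> x = x'].
have [M [[okM1 okM2 okM3] maxM]] : exists M, ok M /\ forall N, M `<` N -> ~ ok N.
  apply: Zorn_bigcup => F Fok Ftot; split.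
  - by move=> p [R FR Rp]; have [+ _ _] := Fok R FR; apply.
  - move=> x y y' [R1 F1 r1] [R2 F2 r2].
    have [[_ o2 _] [_ o1 _]] := (Fok R2 F2, Fok R1 F1).
    by case: (Ftot _ _ F1 F2) => S; [apply: o2 (S _ r1) r2| apply: o1 r1 (S _ r2)].
  - move=> x x' y [R1 F1 r1] [R2 F2 r2].
    have [[_ _ o2] [_ _ o1]] := (Fok R2 F2, Fok R1 F1).
    by case: (Ftot _ _ F1 F2) => S; [apply: o2 (S _ r1) r2| apply: o1 r1 (S _ r2)].
have [allA|nA] := pselect (forall a, A a -> exists y, M (a, y)).
  left.
  have /choice[f hf] : forall x, exists y, A x -> M (x, y).
    move=> x; case: (pselect (A x)) => [/allA[y My]|nx]; first by exists y.
    by exists u0.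
  exists f; split; first by move=> x /hf /okM1 [].
  by move=> x y /hf Mx /hf My e; rewrite e in Mx; apply: okM3 Mx My.
move/existsNP: nA => [a /not_implyP [Aa na]].
have [allB|nB] := pselect (forall b, B b -> exists x, M (x, b)).
  right.
  have /choice[f hf] : forall y, exists x, B y -> M (x, y).
    move=> y; case: (pselect (B y)) => [/allB[x Mx]|ny]; first by exists x.
    by exists t0.
  exists f; split; first by move=> x /hf /okM1 [].
  by move=> x y /hf Mx /hf My e; rewrite e in Mx; apply: okM2 Mx My.
move/existsNP: nB => [b /not_implyP [Bb nb]].
exfalso; apply: (maxM (M `|` [set (a, b)])).
  split; first by move=> p Mp; left.
  by move=> /(_ (a, b) (or_intror erefl)) Mab; apply: na; exists b.
split.
- by move=> p [/okM1//|->].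
- move=> x y y' [r1|[? ?]] [r2|[? ?]]; subst; first exact: okM2 r1 r2.
  + by exfalso; apply: na; exists y.
  + by exfalso; apply: na; exists y'.
  + by [].
- move=> x x' y [r1|[? ?]] [r2|[? ?]]; subst; first exact: okM3 r1 r2.
  + by exfalso; apply: nb; exists x.
  + by exfalso; apply: nb; exists x'.
  + by [].
Qed.

Section Square.
Variables (T : Type) (A : set T) (k : nat -> T).
Hypotheses (kA : forall n, A (k n)) (kinj : forall m n, k m = k n -> m = n).

Let dom (G : set ((T * T) * T)) := [set x | exists z, G ((x, x), z)].
Let ok (G : set ((T * T) * T)) :=
  [/\ forall x y z, G ((x, y), z) -> [/\ dom G x, dom G y & dom G z],
   dom G `<=` A,
   forall x y, dom G x -> dom G y -> exists z, G ((x, y), z),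
   forall p z z', G (p, z) -> G (p, z') -> z = z' &
   forall p p' z, G (p, z) -> G (p', z) -> p = p'].

Let G0 : set ((T * T) * T) :=
  [set q | exists m n, q = ((k m, k n), k (pickle (m, n)))].

Let domG0 x : dom G0 x <-> exists m, x = k m.
Proof.
split => [[z [m [n [e1 e2 _]]]]|[m ->]]; first by exists m.
by exists (k (pickle (m, m))); exists m, m.
Qed.

Let okG0 : ok G0.
Proof.
split.
- move=> x y z [m [n [-> -> ->]]]; split; apply/domG0; by eexists.
- by move=> x /domG0 [m ->].
- by move=> x y /domG0 [m ->] /domG0 [n ->]; eexists; exists m, n.
- move=> p z z' [m [n [-> ->]]] [m' [n' [e1 e2 ->]]].
  by move/kinj: e1 => ->; move/kinj: e2 => ->.
- move=> p p' z [m [n [-> ->]]] [m' [n' [-> e]]].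
  by move/kinj/(pcan_inj pickleK): e => [-> ->].
Qed.

Let dom_sub G G' : G `<=` G' -> dom G `<=` dom G'.
Proof. by move=> GG' x [z Gz]; exists z; apply: GG'. Qed.

Let okU (F : set (set ((T * T) * T))) : F `<=` ok -> total_on F subset ->
  ok (\bigcup_(G in F) G).
Proof.
move=> Fok Ftot.
have domU x : dom (\bigcup_(G in F) G) x -> exists2 G, F G & dom G x.
  by move=> [z [G FG Gz]]; exists G => //; exists z.
have subU G : F G -> G `<=` \bigcup_(G in F) G by move=> FG q Gq; exists G.
split.
- move=> x y z [G FG Gq]; have [+ _ _ _ _] := Fok G FG.
  by move=> /(_ _ _ _ Gq) [dx dy dz]; split; apply: dom_sub (subU _ FG) _ _.
- by move=> x /domU [G FG dx]; have [_ + _ _ _] := Fok G FG; apply.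
- move=> x y /domU [G1 F1 d1] /domU [G2 F2 d2].
  case: (Ftot _ _ F1 F2) => S.
  + have [_ _ + _ _] := Fok G2 F2; move=> /(_ x y (dom_sub S d1) d2) [z Gz].
    by exists z; exists G2.
  + have [_ _ + _ _] := Fok G1 F1; move=> /(_ x y d1 (dom_sub S d2)) [z Gz].
    by exists z; exists G1.
- move=> p z z' [G1 F1 r1] [G2 F2 r2].
  have [[_ _ _ o2 _] [_ _ _ o1 _]] := (Fok G2 F2, Fok G1 F1).
  by case: (Ftot _ _ F1 F2) => S; [apply: o2 (S _ r1) r2| apply: o1 r1 (S _ r2)].
- move=> p p' z [G1 F1 r1] [G2 F2 r2].
  have [[_ _ _ _ o2] [_ _ _ _ o1]] := (Fok G2 F2, Fok G1 F1).
  by case: (Ftot _ _ F1 F2) => S; [apply: o2 (S _ r1) r2| apply: o1 r1 (S _ r2)].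
Qed.

Lemma cle_sq_aux : cle (A `*` A) A.
Proof.
pose P G := G = set0 \/ (ok G /\ G0 `<=` G).
have [M [PM maxM]] : exists M, P M /\ forall N, M `<` N -> ~ P N.
  apply: Zorn_bigcup => F FP Ftot.
  have Fok : F `<=` ok.
    move=> G /FP [->|[]//]; split; [by move=> ? ? ? []|by move=> ? [? []]|
      by move=> ? ? [? []]|by move=> ? ? ? []|by move=> ? ? ? []].
  have [[G1 F1 G01]|nF] := pselect (exists2 G, F G & G0 `<=` G).
    right; split; first exact: okU.
    by move=> q /G01 Gq; exists G1.
  left; apply/seteqP; split => // q [G FG Gq].
  case: (FP G FG) => [e|[_ G0G]]; first by rewrite e in Gq.
  by exfalso; apply: nF; exists G.
have [okM G0M] : ok M /\ G0 `<=` M.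
  case: PM => // M0; exfalso; apply: (maxM G0); last by right; split.
  rewrite M0; split => // /(_ ((k 0, k 0), k (pickle (0, 0))))%N.
  by apply; exists 0%N, 0%N.
case: okM => mA mDA mex mfun minj.
pose D := dom M.
have kD n : D (k n) by apply: dom_sub G0M _ _; apply/domG0; exists n.
have /choice[h hh] : forall p, exists z, D p.1 -> D p.2 -> M (p, z).
  move=> [x y]; case: (pselect (D x)) => dx; last by exists (k 0); move=> /dx.
  case: (pselect (D y)) => dy; last by exists (k 0); move=> _ /dy.
  by have [z Mz] := mex x y dx dy; exists z.
have hD x y : D x -> D y -> D (h (x, y)).
  by move=> dx dy; have [] := mA _ _ _ (hh (x, y) dx dy).
have hinj x y x' y' : D x -> D y -> D x' -> D y' -> h (x, y) = h (x', y') ->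
    x = x' /\ y = y'.
  move=> dx dy dx' dy' e.
  have := minj _ _ _ (hh (x, y) dx dy); rewrite e => /(_ _ (hh (x', y') dx' dy')).
  by case.
have kne m n : m <> n -> k m <> k n by move=> mn /kinj.
case: (cle_total D (A `\` D) (k 0) (k 0)) => [[g [gD ginj]]|[g [gD ginj]]];
    last first.
  pose phi x := if pselect (D x) then h (x, k 0) else h (g x, k 1).
  have phiD x : A x -> D (phi x).
    move=> Ax; rewrite /phi; case: pselect => dx; first exact: hD.
    by apply: hD => //; apply: gD.
  have phiI x y : A x -> A y -> phi x = phi y -> x = y.
    move=> Ax Ay; rewrite /phi; case: pselect => dx; case: pselect => dy.
    - by move=> /hinj [] // ? _; apply: hD.
    - have gy := gD y (conj Ay dy).
      by move=> /hinj [] // _ /kinj.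
    - have gx := gD x (conj Ax dx).
      by move=> /hinj [] // _ /kinj.
    - have gx := gD x (conj Ax dx); have gy := gD y (conj Ay dy).
      by move=> /hinj [] // e _; exact: (ginj x y (conj Ax dx) (conj Ay dy) e).
  exists (fun p => h (phi p.1, phi p.2)); split.
    by move=> [x y] [/= Ax Ay]; apply/mDA/hD; apply: phiD.
  move=> [x y] [x' y'] [/= Ax Ay] [/= Ax' Ay'] /hinj [] //; try exact: phiD.
  by move=> /phiI -> // /phiI ->.
exfalso.
pose D' := g @` D.
have /choice[gi hgi] : forall y, exists x, D' y -> D x /\ g x = y.
  move=> y; case: (pselect (D' y)) => [[x dx <-]|ny]; first by exists x.
  by exists (k 0).
have DD' x : D x -> D' x -> False.
  by move=> dx [w dw gw]; have [_] := gD w dw; rewrite gw.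
have D'g w : D w -> D' (g w) by move=> dw; exists w.
have giD y : D' y -> D (gi y) by move=> /hgi [].
have giK y : D' y -> g (gi y) = y by move=> /hgi [].
pose e i a b := g (h (h (a, b), k i)).
have eD' i a b : D a -> D b -> D' (e i a b).
  by move=> da db; apply/D'g/hD => //; apply: hD.
have einj i j a b a' b' : D a -> D b -> D a' -> D b' -> e i a b = e j a' b' ->
    [/\ a = a', b = b' & i = j].
  move=> da db da' db' /ginj; rewrite /e.
  move=> /(_ (hD _ _ (hD _ _ da db) (kD _)) (hD _ _ (hD _ _ da' db') (kD _))).
  move=> /hinj [] //; try exact: hD.
  by move=> /hinj [] // -> -> /kinj ->.
pose N : set ((T * T) * T) := fun q =>
  [\/ [/\ D q.1.1, D' q.1.2 & q.2 = e 0 q.1.1 (gi q.1.2)]%N,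
      [/\ D' q.1.1, D q.1.2 & q.2 = e 1 (gi q.1.1) q.1.2]%N |
      [/\ D' q.1.1, D' q.1.2 & q.2 = e 2 (gi q.1.1) (gi q.1.2)]%N].
pose M' := M `|` N.
have domM' x : dom M' x <-> D x \/ D' x.
  split.
    move=> [z [Mz|[[]|[]|[]]]] /=; by [left; exists z| left| right].
  move=> [dx|dx]; first by exists (h (x, x)); left; exact: hh.
  by exists (e 2 (gi x) (gi x)); right; apply: Or33.
apply: (maxM M').
  split; first by move=> q Mq; left.
  have dg := D'g _ (kD 0%N).
  move=> /(_ ((g (k 0), g (k 0)), e 2 (gi (g (k 0))) (gi (g (k 0)))))%N.
  have /[swap]/[apply] : M' ((g (k 0), g (k 0)), e 2 (gi (g (k 0))) (gi (g (k 0))))%N.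
    by right; apply: Or33.
  by move=> /mA [dx _ _]; apply: DD' dx dg.
right; split; last by move=> q /G0M Mq; left.
split.
- move=> x y z [Mq|Nq].
    by have [dx dy dz] := mA _ _ _ Mq; split; apply/domM'; left.
  have ez : forall i a b, D a -> D b -> dom M' (e i a b).
    by move=> i a b da db; apply/domM'; right; apply: eD'.
  case: Nq => -[/= dx dy ->]; (split; last (apply: ez; try apply: giD; done));
    apply/domM'; by [left|right].
- move=> x /domM' [/mDA//|[w dw <-]].
  by have [] := gD w dw.
- move=> x y /domM' [dx|dx] /domM' [dy|dy].
  + by have := hh (x, y) dx dy; exists (h (x, y)); left.
  + by exists (e 0 x (gi y))%N; right; apply: Or31.
  + by exists (e 1 (gi x) y)%N; right; apply: Or32.
  + by exists (e 2 (gi x) (gi y))%N; right; apply: Or33.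
- move=> [x y] z z' [Mz|Nz] [Mz'|Nz'].
  + exact: mfun Mz Mz'.
  + have [dx dy _] := mA _ _ _ Mz.
    by case: Nz' => -[/= dx' dy' _]; exfalso; [apply: DD' dy dy'|
      apply: DD' dx dx'|apply: DD' dx dx'].
  + have [dx dy _] := mA _ _ _ Mz'.
    by case: Nz => -[/= dx' dy' _]; exfalso; [apply: DD' dy dy'|
      apply: DD' dx dx'|apply: DD' dx dx'].
  + case: Nz => -[/= dx dy ->]; case: Nz' => -[/= dx' dy' ->] //; exfalso;
    by [apply: DD' dx dx'|apply: DD' dy dy'|apply: DD' dx' dx|apply: DD' dy' dy].
- move=> [x y] [x' y'] z [Mz|Nz] [Mz'|Nz'].
  + exact: minj Mz Mz'.
  + have [_ _ dz] := mA _ _ _ Mz; exfalso.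
    by case: Nz' => -[/= dx' dy' ez]; apply: (DD' _ dz); rewrite ez;
      apply: eD' => //; apply: giD.
  + have [_ _ dz] := mA _ _ _ Mz'; exfalso.
    by case: Nz => -[/= dx' dy' ez]; apply: (DD' _ dz); rewrite ez;
      apply: eD' => //; apply: giD.
  + pose R i a b := if i == 0%N then (a, g b) else
      if i == 1%N then (g a, b) else (g a, g b).
    have Ndec x1 y1 z1 : N ((x1, y1), z1) -> exists i a b,
        [/\ D a, D b, z1 = e i a b & (x1, y1) = R i a b].
      case=> -[/= dx dy ->].
      * by exists 0%N, x1, (gi y1); split => //; [apply: giD|rewrite /R giK].
      * by exists 1%N, (gi x1), y1; split => //; [apply: giD|rewrite /R giK].
      * exists 2%N, (gi x1), (gi y1); split => //; try exact: giD.
        by rewrite /R /= !giK.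
    have [i [a [b [da db ez ->]]]] := Ndec _ _ _ Nz.
    have [i' [a' [b' [da' db' ez' ->]]]] := Ndec _ _ _ Nz'.
    rewrite ez in ez'.
    by have [-> -> ->] := einj _ _ _ _ _ _ da db da' db' ez'.
Qed.

End Square.

Lemma cle_sq T (A : set T) : cle [set: nat] A -> cle (A `*` A) A.
Proof.
move=> [k [kA kinj]]; apply: (@cle_sq_aux _ _ k) => // [n|m n]; first exact: kA.
exact: kinj.
Qed.

Lemma cle_X2 T U V (A : set T) (B1 : set U) (B2 : set V) :
  cle [set: nat] A -> cle B1 A -> cle B2 A -> cle (B1 `*` B2) A.
Proof.
by move=> NA h1 h2; apply: cle_trans (cle_X h1 h2) (cle_sq NA).
Qed.

Definition allP {T} (E : set T) (l : seq T) : Prop :=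
  foldr (fun x P => E x /\ P) True l.

Lemma cle_seq T (E : set T) : cle [set: nat] E -> cle [set l | allP E l] E.
Proof.
move=> NE; have [k [kE kinj]] := NE; have [s [sE sinj]] := cle_sq NE.
have Sn_le n : exists f : seq T -> T,
    (forall l, allP E l /\ size l = n -> E (f l)) /\
    (forall l l', allP E l /\ size l = n -> allP E l' /\ size l' = n ->
       f l = f l' -> l = l').
  elim: n => [|n [f [fE finj]]].
    exists (fun _ => k 0%N); split; first by move=> *; apply: kE.
    by move=> l l' [_ /size0nil ->] [_ /size0nil ->].
  exists (fun l => s (head (k 0%N) l, f (behead l))); split.
    case=> [|x l] [/= al sz] //; case: al => Ex al.
    by apply: sE; split => //=; apply: fE; split => //; case: sz.
  case=> [|x l] [|y l'] [al sz] [al' sz'] //= e.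
  case: al al' sz sz' e => Ex al [Ey al'] [sz] [sz'] e.
  have [] := sinj (x, f l) (y, f l') (conj Ex (fE _ (conj al sz)))
    (conj Ey (fE _ (conj al' sz'))) e.
  by move=> -> /finj -> //.
have /choice[F hF] := Sn_le.
exists (fun l => s (k (size l), F (size l) l)); split.
  by move=> l al; apply: sE; split; [apply: kE|apply: (hF _).1].
move=> l l' al al' e.
have [] := sinj (k (size l), F (size l) l) (k (size l'), F (size l') l') (conj (kE (size l) I) ((hF (size l)).1 l (conj al erefl)))
  (conj (kE (size l') I) ((hF (size l')).1 l' (conj al' erefl))) e.
move=> /kinj => /(_ I I) eqs; rewrite -eqs => eF.
by apply: (hF (size l)).2 eF => //; split.
Qed.

Lemma cle_final T U V (H : set T) (Q : set U) (B0 : set V) (q0 : U) :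
  Q q0 -> cle [set: nat] H -> cle Q [set: nat] -> cle B0 [set: nat] ->
  cle ([set l | allP (Q `*` H) l] `*` B0) H.
Proof.
move=> Qq0 NH QN B0N.
have [k [kH kinj]] := NH.
have NE : cle [set: nat] (Q `*` H).
  exists (fun n => (q0, k n)); split; first by move=> n _; split => //; exact: kH.
  by move=> m n _ _ [] /kinj; apply.
have EH : cle (Q `*` H) H.
  by apply: cle_X2 => //; [apply: cle_trans QN NH|apply: cle_refl].
apply: cle_X2 => //; first exact: cle_trans (cle_seq NE) EH.
exact: cle_trans B0N NH.
Qed.

Local Open Scope ring_scope.

Unset Implicit Arguments.
Section Top.
Variables (K : numFieldType) (X : topologicalLmodType K).

Lemma scale_l_cont (v : X) : continuous (fun k : K^o => k *: v).
Proof.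
move=> k.
apply: (@continuous_comp _ (K^o * X)%type _ (fun k : K^o => (k, v)) (fun z : K^o * X => z.1 *: z.2)).
  exact: (@cvg_pair _ _ _ (nbhs k) (nbhs k) (nbhs v) _ _ _ id (fun=> v) cvg_id (cvg_cst v)).
exact: scale_continuous.
Qed.

Lemma sub_r_cont (d : X) : continuous (fun y : X => y - d).
Proof.
move=> y.
apply: (@continuous_comp _ (X * X)%type _ (fun y : X => (y, d)) (fun z : X * X => z.1 - z.2)).
  exact: (@cvg_pair _ _ _ (nbhs y) (nbhs y) (nbhs d) _ _ _ id (fun=> d) cvg_id (cvg_cst d)).
exact: sub_continuous.
Qed.

Lemma sub_l_cont (d : X) : continuous (fun y : X => d - y).
Proof.
move=> y.
apply: (@continuous_comp _ (X * X)%type _ (fun y : X => (d, y)) (fun z : X * X => z.1 - z.2)).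
  exact: (@cvg_pair _ _ _ (nbhs y) (nbhs d) (nbhs y) _ _ _ (fun=> d) id (cvg_cst d) cvg_id).
exact: sub_continuous.
Qed.

Lemma nbhs_pairP (a b : X) (P : set (X * X)) : nbhs (a, b) P ->
  exists2 W1, nbhs a W1 & exists2 W2, nbhs b W2 & forall x y, W1 x -> W2 y -> P (x, y).
Proof.
move=> [[A B] /= [nA nB] AB]; exists A => //; exists B => // x y Ax By.
exact: (AB (x, y)).
Qed.


Lemma add_l_cont (d : X) : continuous (fun y : X => d + y).
Proof.
move=> y.
apply: (@continuous_comp _ (X * X)%type _ (fun y : X => (d, y)) (fun z : X * X => z.1 + z.2)).
  exact: (@cvg_pair _ _ _ (nbhs y) (nbhs d) (nbhs y) _ _ _ (fun=> d) id (cvg_cst d) cvg_id).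
exact: add_continuous.
Qed.

Variables (Qs : set K) (Qd : forall (k : K^o) (W : set K^o), nbhs k W -> exists2 q, Qs q & W q).

Lemma approx (H : set X) (l : seq (K * X)) : allP ([set: K] `*` H) l ->
  forall W, nbhs (\sum_(p <- l) p.1 *: p.2) W ->
  exists l', allP (Qs `*` H) l' /\ W (\sum_(p <- l') p.1 *: p.2).
Proof.
elim: l => [|p l IH] /= al W nW.
  by exists [::]; split => //; rewrite big_nil in nW *; exact: nbhs_singleton nW.
case: al => [[_ Hp] al]; rewrite big_cons in nW.
have := add_continuous (p.1 *: p.2, \sum_(p <- l) p.1 *: p.2) W nW.
move/nbhs_pairP => [W1 nW1 [W2 nW2 W12]].
have [l' [al' Wl']] := IH al W2 nW2.
have [q Qq Wq] := @Qd p.1 _ (@scale_l_cont p.2 p.1 W1 nW1).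
exists ((q, p.2) :: l'); split; first by split.
by rewrite big_cons /=; exact: W12 Wq Wl'.
Qed.


Lemma main_gen (q0 : K) : Qs q0 -> cle Qs [set: nat] ->
  first_countable X -> infinite_dimensional X ->
  forall H : set X, hamel_basis H ->
    exists B : set (set X), basis B /\ (B #<= H)%card.
Proof.
move=> Qq0 QN fc idim H [Hind Hsp].
have Hinf : ~ finite_set H by move=> fH; apply: idim; exists H; split.
have NH : cle [set: nat] H.
  by apply: (@cardle_cle _ _ _ _ 0%N I); apply/infiniteP.
have [B0 [B0c B0n B0b]] := fc 0.
have [U0 B0U0 _] := B0b setT filterT.
have B0N : cle B0 [set: nat] := cardle_cle B0U0 B0c.
pose sig (l : seq (K * X)) := \sum_(p <- l) p.1 *: p.2.
pose Ls := [set l | allP (Qs `*` H) l].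
pose Fm (p : seq (K * X) * set X) := [set y | p.2° (y - sig p.1)].
have dense (x : X) (W : set X) : nbhs x W -> exists l, Ls l /\ W (sig l).
  have [s [c [sH ->]]] := Hsp x.
  rewrite -(big_map (fun v => (c v, v)) xpredT (fun p => p.1 *: p.2)).
  apply: approx.
  elim: s sH => [|v s IH] sH //=; split; first by split => //; apply: sH; rewrite inE eqxx.
  by apply: IH => w ws; apply: sH; rewrite inE ws orbT.
exists (Fm @` (Ls `*` B0)); split; last first.
  apply: cle_cardle; apply: cle_trans (cle_image _ _ ([::], U0)) _.
  exact: (cle_final Qq0 NH QN B0N).
split.
  move=> S [[l U] _ <-]; rewrite /Fm /=.
  apply: (@open_comp _ _ (fun y => y - sig l) (U°)); last exact: open_interior.
  by move=> y _; apply: sub_r_cont.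
move=> x W /= nW.
have nW' : nbhs (0 : X) [set y | W (x + y)].
  by apply: (add_l_cont x 0); rewrite addr0.
have : nbhs ((0 : X), (0 : X)) ((fun z : X * X => z.1 - z.2) @^-1` [set y | W (x + y)]).
  by apply: (@sub_continuous X (0, 0)); rewrite /= subrr.
move/nbhs_pairP => [V1 nV1 [V2 nV2 V12]].
have [U B0U UV] := B0b (V1 `&` V2) (filterI nV1 nV2).
have nUi := nbhs_interior (B0n U B0U).
have nN : nbhs x [set y | U° (x - y)].
  by apply: (sub_l_cont x x); rewrite subrr.
have [l [Lsl dN]] := dense x _ nN.
exists (Fm (l, U)); first by split; [exists (l, U)|].
move=> y /= Uy.
have := V12 _ _ (UV _ (interior_subset Uy)).1 (UV _ (interior_subset dN)).2.
by rewrite /= opprB addrC !addrA !subrK.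
Qed.

End Top.

Lemma QdR (R : realType) (k : R^o) (W : set R^o) : nbhs k W ->
  exists2 q : R, [set ratr r | r in [set: rat]] q & W q.
Proof.
move/nbhs_ballP => [e /= e0 sW].
have [|q] := @rat_in_itvoo R (k - e) (k + e).
  by rewrite ltrBlDr -addrA ltrDl; apply: addr_gt0.
rewrite in_itv /= => qi.
exists (ratr q); first by exists q.
apply: sW; rewrite -ball_normE /ball_ /=.
by rewrite ltr_distlC.
Qed.

Lemma QdC (R : realType) (k : R[i]^o) (W : set R[i]^o) : nbhs k W ->
  exists2 q : R[i], [set Complex (ratr r.1) (ratr r.2) | r in [set: rat * rat]] q & W q.
Proof.
move/nbhs_ballP => [e /= e0 sW].
move: k e e0 sW => [a b] [r c] e0 sW.
rewrite -ball_normE /ball_ /= in sW.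
move: e0; rewrite ltcE /= => /andP [/eqP c0 r0]; subst c.
have r2 : 0 < r / 2 by apply: divr_gt0.
have [|p] := @rat_in_itvoo R (a - r / 2) (a + r / 2); first by lra.
rewrite in_itv /= => /andP [p1 p2].
have [|q] := @rat_in_itvoo R (b - r / 2) (b + r / 2); first by lra.
rewrite in_itv /= => /andP [q1 q2].
exists (Complex (ratr p) (ratr q)); first by exists (p, q).
apply: sW => /=; rewrite normc_def /=.
rewrite ltcR -(@ger0_norm _ r) ?ltW // -sqrtr_sqr ltr_sqrt; last first.
  by rewrite exprn_gt0.
set u := a - ratr p; set v := b - ratr q.
have u1 : - (r / 2) < u by rewrite /u; lra.
have u2 : u < r / 2 by rewrite /u; lra.
have v1 : - (r / 2) < v by rewrite /v; lra.
have v2 : v < r / 2 by rewrite /v; lra.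
rewrite !expr2; nra.
Qed.


Lemma cle_rat : cle [set: rat] [set: nat].
Proof. by exists pickle; split => // x y _ _ /(pcan_inj pickleK). Qed.

Lemma cle_rat2 : cle [set: rat * rat] [set: nat].
Proof. by exists pickle; split => // x y _ _ /(pcan_inj pickleK). Qed.

End Aux.
Import Aux.

Local Open Scope ring_scope.

Theorem theorem3p6 (R : realType) :
  (forall X : topologicalLmodType R,
     first_countable X -> infinite_dimensional X ->
     forall H : set X, hamel_basis H ->
       exists B : set (set X), basis B /\ (B #<= H)%card) /\
  (forall X : topologicalLmodType R[i],
     first_countable X -> infinite_dimensional X ->
     forall H : set X, hamel_basis H ->
       exists B : set (set X), basis B /\ (B #<= H)%card).
Proof.
split.
- move=> X fc idim H hb.
  apply: (@main_gen R X _ (@QdR R) 0) => //.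
    by exists 0%Q => //; rewrite rmorph0.
  exact: cle_trans (cle_image _ _ 0%Q) cle_rat.
- move=> X fc idim H hb.
  apply: (@main_gen R[i] X _ (@QdC R) 0) => //.
    by exists (0, 0)%Q => //=; rewrite rmorph0.
  exact: cle_trans (cle_image _ _ (0, 0)%Q) cle_rat2.
Qed.
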